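(* Let $\mu_1(\xi)$ denote the second eigenvalue of the operator $-\frac{d^2}{dt^2}+(\xi+t)^2$ in $L_2(\mathbb{R}_+)$ with Neumann boundary condition at $t=0$, and $\Theta_1:=\inf_{\xi\in\mathbb{R}}\mu_1(\xi)$. Then $\Theta_1>1$. *)

(* Defs.v *)
From Stdlib Require Import Reals.
From Coquelicot Require Import Coquelicot.
Open Scope R_scope.

Definition deGennes_eigenpair (xi lam : R) (u : R -> R) : Prop :=
  (forall t : R, ex_derive u t /\ ex_derive (Derive u) t) /\
  (forall t : R, 0 <= t ->
      - Derive (Derive u) t + (xi + t) ^ 2 * u t = lam * u t) /\
  Derive u 0 = 0 /\
  ex_RInt_gen (fun t => (u t) ^ 2) (at_point 0) (Rbar_locally p_infty) /\
  (exists t : R, 0 <= t /\ u t <> 0).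

Definition is_deGennes_eigenvalue (xi lam : R) : Prop :=
  exists u : R -> R, deGennes_eigenpair xi lam u.

(* Second eigenvalue mu_1(xi): the infimum of the eigenvalues that are not
   the lowest one (the spectrum is discrete and simple). *)
Definition mu1 (xi : R) : Rbar :=
  Glb_Rbar (fun lam => is_deGennes_eigenvalue xi lam /\
                       exists lam0, is_deGennes_eigenvalue xi lam0 /\ lam0 < lam).

Definition Theta1 : Rbar :=
  Glb_Rbar (fun x => exists xi : R, mu1 xi = Finite x).

(* Main.v *)
Require Import Defs.
From Stdlib Require Import Reals Lra Lia Classical FunctionalExtensionality.
From Coquelicot Require Import Coquelicot.
Open Scope R_scope.

Ltac etafix := repeat match goal with |- context [fun x0 : R => ?f x0] => change (fun x0:R => f x0) with f end.
Ltac sd Hd := etafix; repeat split; try (apply (proj1 (Hd _))); try (apply (proj2 (Hd _))).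



Lemma cont_of_der f x : ex_derive f x -> continuity_pt f x.
Proof. intro H. apply continuity_pt_filterlim. apply (ex_derive_continuous f x H). Qed.

Lemma mono_le f df a b : a <= b ->
  (forall x, a <= x <= b -> is_derive f x (df x)) ->
  (forall x, a <= x <= b -> 0 <= df x) -> f a <= f b.
Proof.
  intros Hab Hd Hp.
  destruct (MVT_gen f a b df) as [c [Hc Heq]]; cbv zeta in *.
  - intros x Hx. rewrite Rmin_left in Hx by lra. rewrite Rmax_right in Hx by lra. apply Hd; lra.
  - intros x Hx. rewrite Rmin_left in Hx by lra; rewrite Rmax_right in Hx by lra.
    apply cont_of_der. eexists. apply Hd; lra.
  - rewrite Rmin_left in Hc by lra; rewrite Rmax_right in Hc by lra.
    assert (0 <= df c) by (apply Hp; lra). nra.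
Qed.

Lemma mono_lt f df a b : a < b ->
  (forall x, a <= x <= b -> is_derive f x (df x)) ->
  (forall x, a <= x <= b -> 0 < df x) -> f a < f b.
Proof.
  intros Hab Hd Hp.
  destruct (MVT_gen f a b df) as [c [Hc Heq]]; cbv zeta in *.
  - intros x Hx. rewrite Rmin_left in Hx by lra. rewrite Rmax_right in Hx by lra. apply Hd; lra.
  - intros x Hx. rewrite Rmin_left in Hx by lra; rewrite Rmax_right in Hx by lra.
    apply cont_of_der. eexists. apply Hd; lra.
  - rewrite Rmin_left in Hc by lra; rewrite Rmax_right in Hc by lra.
    assert (0 < df c) by (apply Hp; lra). nra.
Qed.

Lemma cont_pos f z : continuous f z -> 0 < f z ->
  exists d, 0 < d /\ forall y, Rabs (y - z) < d -> 0 < f y.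
Proof.
  intros Hc Hz.
  assert (He : 0 < f z / 2) by lra.
  specialize (Hc (ball (f z) (mkposreal _ He)) (locally_ball _ _)).
  destruct Hc as [d Hd]. exists d. split. apply cond_pos.
  intros y Hy. specialize (Hd y Hy). unfold ball in Hd; simpl in Hd.
  unfold AbsRing_ball, abs, minus, plus, opp in Hd; simpl in Hd.
  apply Rabs_def2 in Hd. lra.
Qed.

Lemma first_zero f a b : (forall x, continuous f x) -> a < b -> 0 < f a -> f b <= 0 ->
  exists e, a < e <= b /\ f e = 0 /\ forall y, a <= y < e -> 0 < f y.
Proof.
  intros Hc Hab Ha Hb.
  set (E := fun x => a <= x <= b /\ forall y, a <= y <= x -> 0 < f y).
  assert (Hbd : bound E). { exists b. intros x Hx. apply Hx. }
  assert (Hex : exists x, E x). { exists a. split. lra. intros y Hy. replace y with a by lra. auto. }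
  destruct (completeness E Hbd Hex) as [e [He1 He2]].
  assert (Hae : a <= e) by (apply He1; destruct Hex; unfold E; split; [lra| intros y Hy; replace y with a by lra; auto]).
  assert (Heb : e <= b) by (apply He2; intros x Hx; apply Hx).
  assert (Hpos : forall y, a <= y < e -> 0 < f y).
  { intros y Hy. destruct (classic (exists x, E x /\ y <= x)) as [[x [Hx Hyx]]|Hn].
    - apply Hx. lra.
    - exfalso. assert (e <= y). { apply He2. intros x Hx. destruct (Rle_dec x y); auto. exfalso; apply Hn; exists x; split; auto; lra. } lra. }
  destruct (Rtotal_order (f e) 0) as [Hneg|[Hz|Hp]].
  - exfalso. assert (Hc' : continuous (fun x => - f x) e) by (apply (continuous_opp f); auto).
    destruct (cont_pos _ _ Hc') as [d [Hd Hdd]]. simpl; lra.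
    destruct (Req_dec e a) as [Hea|Hea]. subst. lra.
    set (y := Rmax a (e - d/2)).
    assert (a <= y < e). { unfold y. split. apply Rmax_l. apply Rmax_lub_lt; lra. }
    assert (0 < f y) by (apply Hpos; lra).
    assert (0 < - f y). { apply Hdd. unfold y. apply Rabs_def1; unfold Rmax; destruct Rle_dec; lra. } lra.
  - exists e. assert (e <> a) by (intro; subst; lra). split. lra. split; auto.
  - destruct (Req_dec e b) as [Heb'|Heb'].
    + subst. lra.
    + exfalso. destruct (cont_pos _ _ (Hc e) Hp) as [d [Hd Hdd]].
      set (x := Rmin b (e + d/2)).
      assert (e < x) by (unfold x; apply Rmin_glb_lt; lra).
      assert (E x). { split. split. lra. apply Rmin_l.
        intros y Hy. destruct (Rlt_le_dec y e). apply Hpos; lra.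
        apply Hdd. apply Rabs_def1; unfold x, Rmin in *; destruct Rle_dec; lra. }
      assert (x <= e) by (apply He1; auto). lra.
Qed.


Lemma eig_d1 xi lam u : deGennes_eigenpair xi lam u -> forall t, is_derive u t (Derive u t).
Proof. intros [H _] t. apply Derive_correct, H. Qed.
Lemma eig_d2 xi lam u : deGennes_eigenpair xi lam u -> forall t, is_derive (Derive u) t (Derive (Derive u) t).
Proof. intros [H _] t. apply Derive_correct, H. Qed.
Lemma eig_ode xi lam u : deGennes_eigenpair xi lam u -> forall t, 0 <= t ->
  Derive (Derive u) t = ((xi + t)^2 - lam) * u t.
Proof. intros [_ [H _]] t Ht. specialize (H t Ht). lra. Qed.
Lemma eig_cont xi lam u : deGennes_eigenpair xi lam u -> forall t, continuous u t.
Proof. intros [H _] t. apply (@ex_derive_continuous R_AbsRing R_NormedModule), H. Qed.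
Lemma eig_cont1 xi lam u : deGennes_eigenpair xi lam u -> forall t, continuous (Derive u) t.
Proof. intros [H _] t. apply (@ex_derive_continuous R_AbsRing R_NormedModule), H. Qed.

Lemma notL2 (f : R -> R) m t1 :
  ex_RInt_gen f (at_point 0) (Rbar_locally p_infty) -> 0 < m ->
  (forall x, t1 <= x -> m <= f x) -> False.
Proof.
  intros [l Hl] Hm Hf.
  assert (H1 : (0 < 1)) by lra.
  specialize (Hl (ball l (mkposreal _ H1)) (locally_ball _ _)).
  destruct Hl as [Q R HQ [M HR] HP].
  set (b1 := Rmax (Rmax M t1) 0 + 1).
  set (b2 := b1 + 3 / m).
  assert (Hb1 : M < b1 /\ t1 < b1 /\ 0 < b1) by (unfold b1; repeat (unfold Rmax; destruct Rle_dec); lra).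
  assert (Hb2 : b1 < b2) by (unfold b2; assert (0 < 3/m) by (apply Rdiv_lt_0_compat; lra); lra).
  destruct (HP 0 b1 HQ (HR b1 ltac:(lra))) as [y1 [Hy1 Hyb1]].
  destruct (HP 0 b2 HQ (HR b2 ltac:(lra))) as [y2 [Hy2 Hyb2]].
  simpl in Hy1, Hy2.
  unfold ball in Hyb1, Hyb2; simpl in Hyb1, Hyb2.
  unfold AbsRing_ball, abs, minus, plus, opp in Hyb1, Hyb2; simpl in Hyb1, Hyb2.
  apply Rabs_def2 in Hyb1. apply Rabs_def2 in Hyb2.
  assert (E2 : ex_RInt f 0 b2) by (eexists; eauto).
  assert (E1 : ex_RInt f 0 b1) by (eexists; eauto).
  assert (E12 : ex_RInt f b1 b2) by (apply (ex_RInt_Chasles_2 f 0); [lra|auto]).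
  assert (HC := RInt_Chasles f 0 b1 b2 E1 E12).
  rewrite (is_RInt_unique f 0 b1 y1 Hy1) in HC.
  rewrite (is_RInt_unique f 0 b2 y2 Hy2) in HC.
  assert (Hle : RInt (fun _ => m) b1 b2 <= RInt f b1 b2).
  { apply RInt_le. lra. apply ex_RInt_const. auto. intros x Hx. apply Hf. lra. }
  rewrite RInt_const in Hle. unfold scal in Hle; simpl in Hle; unfold mult in Hle; simpl in Hle.
  unfold plus in HC; simpl in HC.
  assert ((b2 - b1) * m = 3) by (unfold b2; field; lra).
  lra.
Qed.



Lemma sq_abs a : Rabs a ^ 2 = a ^ 2.
Proof. rewrite RPow_abs; apply Rabs_right; apply Rle_ge, pow2_ge_0. Qed.

Lemma abs_bound a b c K : Rabs c <= K -> Rabs (2*a*b*c) <= K*(a^2+b^2).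
Proof.
  intros Hc. rewrite !Rabs_mult. rewrite (Rabs_right 2) by lra.
  assert (0 <= Rabs a) by apply Rabs_pos. assert (0 <= Rabs b) by apply Rabs_pos.
  assert (0 <= Rabs c) by apply Rabs_pos.
  rewrite <- (sq_abs a), <- (sq_abs b).
  assert (2 * Rabs a * Rabs b <= Rabs a ^2 + Rabs b ^2) by (assert (0 <= (Rabs a - Rabs b)^2) by apply pow2_ge_0; nra).
  assert (0 <= Rabs a ^2 + Rabs b ^2) by nra.
  nra.
Qed.

Lemma eig_unique xi lam u t0 : deGennes_eigenpair xi lam u -> 0 <= t0 ->
  u t0 = 0 -> Derive u t0 = 0 -> forall t, 0 <= t -> u t = 0.
Proof.
  intros H H0 Hu Hd t Ht.
  set (b := Rmax t t0).
  set (K := 1 + ((Rabs xi + b)^2 + Rabs lam)).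
  set (G := fun x => u x ^2 + Derive u x ^2).
  set (dG := fun x => 2 * u x * Derive u x * (1 + ((xi+x)^2 - lam))).
  assert (HdG : forall x, 0 <= x -> ex_derive G x /\ Derive G x = dG x).
  { intros x Hx. assert (Hd1 : ex_derive u x /\ ex_derive (Derive u) x) by apply H.
    assert (HH : is_derive G x (dG x)).
    { unfold G, dG. auto_derive. tauto. etafix. rewrite (eig_ode xi lam u H x Hx). ring. }
    split. eexists; eauto. apply is_derive_unique; auto. }
  assert (Hbnd : forall x, 0 <= x <= b -> Rabs (dG x) <= K * G x).
  { intros x Hx. unfold dG, G. apply abs_bound.
    assert (Hb0 : 0 <= b) by (unfold b, Rmax; destruct Rle_dec; lra).
    assert (Rabs (xi + x) <= Rabs xi + b).
    { eapply Rle_trans. apply Rabs_triang. rewrite (Rabs_right x) by lra. lra. }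
    assert ((xi+x)^2 <= (Rabs xi + b)^2).
    { rewrite <- (sq_abs (xi+x)). assert (0 <= Rabs (xi+x)) by apply Rabs_pos. nra. }
    eapply Rle_trans. apply Rabs_triang. rewrite Rabs_R1. unfold K.
    eapply Rle_trans. apply Rplus_le_compat_l. apply Rabs_triang.
    rewrite Rabs_Ropp. rewrite (Rabs_right ((xi+x)^2)) by (apply Rle_ge, pow2_ge_0). lra. }
  assert (HG0 : G t0 = 0) by (unfold G; rewrite Hu, Hd; ring).
  assert (HGpos : 0 <= G t) by (unfold G; nra).
  assert (Htb : t <= b) by apply Rmax_l. assert (Ht0b : t0 <= b) by apply Rmax_r.
  assert (G t <= 0).
  { destruct (Rle_lt_dec t0 t) as [Hle|Hlt].
    - assert (Hm : - (G t0 * exp (-(K*t0))) <= - (G t * exp (-(K*t)))).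
      { apply (mono_le (fun x => - (G x * exp (-(K*x)))) (fun x => exp (-(K*x)) * (K * G x - dG x))).
        auto. intros x Hx. destruct (HdG x ltac:(lra)) as [Hex HD].
        auto_derive. exact Hex. etafix. rewrite HD. ring.
        intros x Hx. assert (Hb := Hbnd x ltac:(lra)). assert (Hb1 := Rle_abs (dG x)); assert (Hb2 := Rle_abs (- dG x)); rewrite Rabs_Ropp in Hb2.
        assert (0 < exp (-(K*x))) by apply exp_pos. nra. }
      rewrite HG0 in Hm. assert (0 < exp (-(K*t))) by apply exp_pos. nra.
    - assert (Hm : G t * exp (K*t) <= G t0 * exp (K*t0)).
      { apply (mono_le (fun x => G x * exp (K*x)) (fun x => exp (K*x) * (K * G x + dG x))).
        lra. intros x Hx. destruct (HdG x ltac:(lra)) as [Hex HD].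
        auto_derive. exact Hex. etafix. rewrite HD. ring.
        intros x Hx. assert (Hb := Hbnd x ltac:(lra)). assert (Hb1 := Rle_abs (dG x)); assert (Hb2 := Rle_abs (- dG x)); rewrite Rabs_Ropp in Hb2.
        assert (0 < exp (K*x)) by apply exp_pos. nra. }
      rewrite HG0 in Hm. assert (0 < exp (K*t)) by apply exp_pos. nra. }
  unfold G in *. nra.
Qed.



Lemma eig_L2 xi lam u : deGennes_eigenpair xi lam u ->
  ex_RInt_gen (fun t => (u t)^2) (at_point 0) (Rbar_locally p_infty).
Proof. intros H; apply H. Qed.

Lemma eig_nondeg xi lam u t0 : deGennes_eigenpair xi lam u -> 0 <= t0 ->
  u t0 = 0 -> Derive u t0 <> 0.
Proof.
  intros H H0 Hu Hd. assert (Hz := eig_unique xi lam u t0 H H0 Hu Hd).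
  destruct H as [_ [_ [_ [_ [t [Ht Hne]]]]]]. apply Hne, Hz, Ht.
Qed.

Lemma tail_sign xi lam u T : deGennes_eigenpair xi lam u -> 0 <= T ->
  (forall t, T <= t -> lam <= (xi+t)^2) -> forall t, T <= t -> u t * Derive u t <= 0.
Proof.
  intros H HT Hq t Ht.
  destruct (Rle_lt_dec (u t * Derive u t) 0) as [|Hg]; auto. exfalso.
  assert (Hd : forall x, ex_derive u x /\ ex_derive (Derive u) x) by apply H.
  assert (H1 : forall x, t <= x -> u t * Derive u t <= u x * Derive u x).
  { intros x Hx. apply (mono_le (fun x => u x * Derive u x)
       (fun x => Derive u x ^2 + ((xi+x)^2 - lam) * u x ^2)); auto.
    intros y Hy. auto_derive. sd Hd. etafix. rewrite (eig_ode xi lam u H y) by lra. ring.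
    intros y Hy. assert (lam <= (xi+y)^2) by (apply Hq; lra). nra. }
  assert (H2 : forall x, t <= x -> u t ^2 <= u x ^2).
  { intros x Hx. apply (mono_le (fun x => u x ^2) (fun x => 2 * (u x * Derive u x))); auto.
    intros y Hy. auto_derive. sd Hd. etafix. ring.
    intros y Hy. specialize (H1 y ltac:(lra)). lra. }
  assert (Hut : u t <> 0) by (intro Hz; rewrite Hz in Hg; lra).
  assert (0 < u t ^2) by (destruct (Rtotal_order (u t) 0) as [|[|]]; [nra|tauto|nra]).
  apply (notL2 (fun x => u x ^2) (u t ^2) t (eig_L2 _ _ _ H)); auto.
Qed.

Lemma tail_decay xi lam u T : deGennes_eigenpair xi lam u -> 0 <= T ->
  (forall t, T <= t -> lam <= (xi+t)^2) -> forall eps, 0 < eps ->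
  exists t1, T <= t1 /\ forall t, t1 <= t -> u t ^2 < eps.
Proof.
  intros H HT Hq eps He.
  assert (Hd : forall x, ex_derive u x /\ ex_derive (Derive u) x) by apply H.
  destruct (classic (exists t1, T <= t1 /\ u t1 ^2 < eps)) as [[t1 [Ht1 Hu1]]|Hn].
  - exists t1. split; auto. intros t Ht.
    assert (- u t1 ^2 <= - u t ^2); [|lra].
    apply (mono_le (fun x => - u x ^2) (fun x => - (2 * (u x * Derive u x)))); auto.
    intros y Hy. auto_derive. sd Hd. etafix. ring.
    intros y Hy. assert (u y * Derive u y <= 0) by (apply (tail_sign xi lam u T); auto; lra). lra.
  - exfalso. apply (notL2 (fun x => u x ^2) eps T (eig_L2 _ _ _ H)); auto.
    intros x Hx. destruct (Rlt_le_dec (u x ^2) eps); auto. exfalso; apply Hn; exists x; auto.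
Qed.

Lemma tail_pos xi lam u T : deGennes_eigenpair xi lam u -> 0 <= T ->
  (forall t, T <= t -> lam <= (xi+t)^2) -> (forall t, T <= t -> 0 < u t) ->
  forall t, T <= t -> Derive u T <= Derive u t <= 0.
Proof.
  intros H HT Hq Hp t Ht.
  assert (Hd : forall x, ex_derive u x /\ ex_derive (Derive u) x) by apply H.
  split.
  - apply (mono_le (Derive u) (fun x => ((xi+x)^2 - lam) * u x)); auto.
    intros y Hy. rewrite <- (eig_ode xi lam u H y) by lra. apply Derive_correct, Hd.
    intros y Hy. assert (lam <= (xi+y)^2) by (apply Hq; lra). assert (0 < u y) by (apply Hp; lra). nra.
  - assert (u t * Derive u t <= 0) by (apply (tail_sign xi lam u T); auto).
    assert (0 < u t) by auto. nra.
Qed.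

Lemma eig_opp xi lam u : deGennes_eigenpair xi lam u -> deGennes_eigenpair xi lam (fun t => - u t).
Proof.
  intros H. assert (Hd : forall x, ex_derive u x /\ ex_derive (Derive u) x) by apply H.
  assert (HD1 : forall x, Derive (fun t => - u t) x = - Derive u x) by (intro; apply Derive_opp).
  assert (HD2 : forall x, Derive (Derive (fun t => - u t)) x = - Derive (Derive u) x).
  { intro x. rewrite (Derive_ext _ (fun t => - Derive u t)) by apply HD1. apply Derive_opp. }
  destruct H as [H1 [H2 [H3 [H4 [t0 [Ht0 H5]]]]]].
  split; [|split; [|split; [|split]]].
  - intro t. split. auto_derive. sd Hd.
    apply (ex_derive_ext (fun t => - Derive u t)). intro; symmetry; apply HD1.
    auto_derive. sd Hd.
  - intros t Ht. rewrite HD2. specialize (H2 t Ht). lra.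
  - rewrite HD1, H3. lra.
  - replace (fun t => (- u t)^2) with (fun t => (u t)^2); auto.
    apply functional_extensionality; intro; ring.
  - exists t0. split; auto. lra.
Qed.



Lemma zero_after_pos xi lam u z : deGennes_eigenpair xi lam u -> u z = 0 -> 0 < Derive u z ->
  exists a, z < a /\ forall y, z < y <= a -> 0 < u y.
Proof.
  intros H Hz Hd.
  destruct (cont_pos _ _ (eig_cont1 xi lam u H z) Hd) as [d [Hd0 Hdd]].
  exists (z + d/2). split. lra. intros y Hy.
  rewrite <- Hz. apply (mono_lt u (Derive u)). lra.
  intros x Hx. apply (eig_d1 xi lam u H).
  intros x Hx. apply Hdd. apply Rabs_def1; lra.
Qed.

Lemma deriv_nonpos_at_zero xi lam u a e : deGennes_eigenpair xi lam u -> a < e -> u e = 0 ->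
  (forall y, a <= y < e -> 0 < u y) -> Derive u e <= 0.
Proof.
  intros H Hae Hz Hp. destruct (Rle_lt_dec (Derive u e) 0) as [|Hd]; auto. exfalso.
  destruct (cont_pos _ _ (eig_cont1 xi lam u H e) Hd) as [d [Hd0 Hdd]].
  set (y := Rmax a (e - d/2)).
  assert (Hy : a <= y < e) by (unfold y; split; [apply Rmax_l| apply Rmax_lub_lt; lra]).
  assert (Hy2 : e - d/2 <= y) by apply Rmax_r.
  assert (u y < u e).
  { apply (mono_lt u (Derive u)). lra. intros x Hx. apply (eig_d1 xi lam u H).
    intros x Hx. apply Hdd. apply Rabs_def1; lra. }
  specialize (Hp y Hy). lra.
Qed.

Lemma eig_sign_pos xi lam u : deGennes_eigenpair xi lam u -> (forall t, 0 <= t -> u t <> 0) ->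
  0 < u 0 -> forall t, 0 <= t -> 0 < u t.
Proof.
  intros H Hnz H0 t Ht. destruct (Rle_lt_dec (u t) 0) as [Hle|]; auto. exfalso.
  destruct (Req_dec t 0) as [->|Hne]. lra.
  destruct (first_zero u 0 t (eig_cont xi lam u H)) as [e [He [Hue _]]]; try lra.
  apply (Hnz e); lra.
Qed.

Lemma eig_sign xi lam u : deGennes_eigenpair xi lam u -> (forall t, 0 <= t -> u t <> 0) ->
  (forall t, 0 <= t -> 0 < u t) \/ (forall t, 0 <= t -> 0 < - u t).
Proof.
  intros H Hnz. destruct (Rtotal_order (u 0) 0) as [Hn|[Hz|Hp]].
  - right. apply (eig_sign_pos xi lam (fun t => - u t)). apply eig_opp, H.
    intros t Ht Hc. apply (Hnz t Ht). lra. lra.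
  - exfalso. apply (Hnz 0); lra.
  - left. apply (eig_sign_pos xi lam u); auto.
Qed.



Ltac fixexp t := repeat match goal with |- context [exp ?a] => tryif constr_eq a t then fail else replace a with t by field end.

Definition hh (xi x : R) := exp (1/4 * ln (xi + x + 21/20) - (xi+x)^2/2).
Definition psi (xi x : R) := 1/4 / (xi + x + 21/20) - (xi + x).
Definition hd (xi x : R) := hh xi x * psi xi x.
Definition dpsi (xi x : R) := - (1/4) / (xi + x + 21/20)^2 - 1.
Definition dhd (xi x : R) := hh xi x * (psi xi x ^2 + dpsi xi x).

Lemma hh_pos xi x : 0 < hh xi x.
Proof. apply exp_pos. Qed.

Lemma hh_der xi x : 0 < xi + x + 21/20 -> is_derive (hh xi) x (hd xi x).
Proof.
  intros Hp. unfold hd, hh, psi. auto_derive. lra. fixexp (1/4 * ln (xi + x + 21/20) - (xi+x)^2/2). field. lra.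
Qed.

Lemma hd_der xi x : 0 < xi + x + 21/20 -> is_derive (hd xi) x (dhd xi x).
Proof.
  intros Hp. unfold dhd, hd, hh, psi, dpsi. auto_derive. lra. fixexp (1/4 * ln (xi + x + 21/20) - (xi+x)^2/2). field. lra.
Qed.



Definition WW xi u t := hh xi t * Derive u t - hd xi t * u t.

Lemma W_der xi lam u x : deGennes_eigenpair xi lam u -> 0 <= x -> 0 < xi + x + 21/20 ->
  is_derive (WW xi u) x (hh xi x * u x * (((xi+x)^2 - lam) - psi xi x ^2 - dpsi xi x)).
Proof.
  intros H Hx Hp.
  assert (Hd : forall x, ex_derive u x /\ ex_derive (Derive u) x) by apply H.
  assert (E1 := is_derive_unique _ _ _ (hh_der xi x Hp)).
  assert (E2 := is_derive_unique _ _ _ (hd_der xi x Hp)).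
  assert (X1 : ex_derive (hh xi) x) by (eexists; apply hh_der; auto).
  assert (X2 : ex_derive (hd xi) x) by (eexists; apply hd_der; auto).
  unfold WW. auto_derive. sd Hd; auto.
  etafix. rewrite E1, E2, (eig_ode xi lam u H x Hx). unfold dhd, hd. ring.
Qed.

Lemma dW_nonneg xi lam x : -101/100 < xi + x -> lam < 51/50 ->
  0 <= ((xi+x)^2 - lam) - psi xi x ^2 - dpsi xi x.
Proof.
  intros Hs Hl. unfold psi, dpsi.
  set (s := xi + x). assert (Hy : 0 < s + 21/20) by (unfold s; lra).
  replace ((s^2 - lam) - (1/4 / (s+21/20) - s)^2 - (- (1/4) / (s+21/20)^2 - 1))
    with (((1-lam)*(s+21/20)^2 + 3/16 + s*(s+21/20)/2) / (s+21/20)^2) by (field; lra).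
  apply Rmult_le_pos. 2: { apply Rlt_le, Rinv_0_lt_compat. nra. }
  assert (0 <= (1 - lam - (-1/50)) * (s+21/20)^2) by (apply Rmult_le_pos; nra).
  assert (0 <= (s + 21/20 - 35/64)^2) by apply pow2_ge_0.
  nra.
Qed.

Lemma tail_hd xi x : 2 <= xi + x -> hd xi x <= 0 /\ 0 <= dhd xi x.
Proof.
  intros Hs. unfold hd, dhd, psi, dpsi.
  assert (Hh := hh_pos xi x).
  set (s := xi + x). assert (Hy : 3 <= s + 21/20) by (unfold s; lra).
  set (w := / (s + 21/20)).
  assert (Hw : 0 < w <= 1/3).
  { unfold w. split. apply Rinv_0_lt_compat; lra.
    replace (1/3) with (/3) by field. apply Rinv_le_contravar; lra. }
  replace (1/4 / (s+21/20)) with (w/4) by (unfold w; field; lra).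
  replace (- (1/4) / (s+21/20)^2) with (- w^2/4) by (unfold w; field; lra).
  split.
  - assert (w/4 - s < 0) by lra. nra.
  - apply Rmult_le_pos. lra. nra.
Qed.

Lemma tail_core xi lam u z : deGennes_eigenpair xi lam u -> lam < 51/50 -> 0 <= z ->
  -101/100 < xi + z -> u z = 0 -> 0 < Derive u z -> False.
Proof.
  intros H Hl Hz0 Hzk Huz Hdz.
  destruct (zero_after_pos xi lam u z H Huz Hdz) as [a [Hza Ha]].
  set (dW := fun x => hh xi x * u x * (((xi+x)^2 - lam) - psi xi x ^2 - dpsi xi x)).
  assert (HW : forall x, z <= x -> is_derive (WW xi u) x (dW x)).
  { intros x Hx. apply W_der; auto; lra. }
  assert (HWz : 0 < WW xi u z).
  { unfold WW. rewrite Huz. assert (Hh := hh_pos xi z). nra. }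
  assert (Hmono : forall e, z <= e -> (forall x, z <= x <= e -> 0 <= u x) -> WW xi u z <= WW xi u e).
  { intros e He Hu. apply (mono_le (WW xi u) dW); auto.
    intros x Hx. apply HW; lra.
    intros x Hx. unfold dW. apply Rmult_le_pos. apply Rmult_le_pos.
    apply Rlt_le, hh_pos. apply Hu; auto. apply dW_nonneg; lra. }
  assert (Hpos : forall y, z < y -> 0 < u y).
  { intros y Hy. destruct (Rle_lt_dec y a) as [Hya|Hya]. apply Ha; lra.
    destruct (Rle_lt_dec (u y) 0) as [Hle|]; auto. exfalso.
    assert (Hua : 0 < u a) by (apply Ha; lra).
    destruct (first_zero u a y (eig_cont xi lam u H) Hya Hua Hle) as [e [He [Hue Hpe]]].
    assert (Hde := deriv_nonpos_at_zero xi lam u a e H ltac:(lra) Hue Hpe).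
    assert (HWe : WW xi u e <= 0).
    { unfold WW. rewrite Hue. assert (Hh := hh_pos xi e). nra. }
    assert (WW xi u z <= WW xi u e); [|lra].
    apply Hmono. lra. intros x Hx.
    destruct (Req_dec x z) as [->|Hxz]. lra.
    destruct (Rle_lt_dec x a). apply Rlt_le, Ha; lra.
    destruct (Req_dec x e) as [->|Hxe]. lra.
    apply Rlt_le, Hpe; lra. }
  set (T := Rmax a (2 - xi)).
  assert (HTa : a <= T) by apply Rmax_l. assert (HT2 : 2 - xi <= T) by apply Rmax_r.
  assert (HT0 : 0 <= T) by lra.
  assert (Hq : forall t, T <= t -> lam <= (xi+t)^2) by (intros t Ht; nra).
  assert (Hp' : forall t, T <= t -> 0 < u t) by (intros t Ht; apply Hpos; lra).
  assert (Hud : forall t, T <= t -> Derive u t <= 0).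
  { intros t Ht. apply (tail_pos xi lam u T H HT0 Hq Hp' t Ht). }
  set (M := - hd xi T).
  assert (HM : forall t, T <= t -> 0 <= - hd xi t <= M).
  { intros t Ht. split. assert (X := tail_hd xi t ltac:(lra)). lra.
    unfold M. assert (hd xi T <= hd xi t); [|lra].
    apply (mono_le (hd xi) (dhd xi)); auto.
    intros x Hx. apply hd_der. lra.
    intros x Hx. apply (tail_hd xi x). lra. }
  assert (HWle : forall t, T <= t -> WW xi u t <= M * u t).
  { intros t Ht. unfold WW. assert (Hh := hh_pos xi t). specialize (Hud t Ht).
    specialize (HM t Ht). specialize (Hp' t Ht). nra. }
  assert (HM0 : 0 <= M) by (destruct (HM T ltac:(lra)); lra).
  set (r := WW xi u z / (M+1)).
  assert (Hr : 0 < r) by (unfold r; apply Rdiv_lt_0_compat; lra).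
  assert (Hr2 : WW xi u z = r * (M+1)) by (unfold r; field; lra).
  destruct (tail_decay xi lam u T H HT0 Hq (r^2) ltac:(nra)) as [t1 [Ht1 Hdec]].
  specialize (Hdec t1 ltac:(lra)).
  assert (Hu1 := Hp' t1 Ht1).
  assert (Hlt : u t1 < r) by nra.
  assert (HWt1 := HWle t1 Ht1).
  assert (WW xi u z <= WW xi u t1).
  { apply Hmono. lra. intros x Hx. destruct (Req_dec x z) as [->|]. lra. apply Rlt_le, Hpos; lra. }
  nra.
Qed.



Lemma no_zero xi lam u : deGennes_eigenpair xi lam u -> lam < 51/50 ->
  forall t, 0 <= t -> u t <> 0.
Proof.
  intros H Hl t Ht Hz.
  assert (Hnd := eig_nondeg xi lam u t H Ht Hz).
  assert (Hd : forall x, ex_derive u x /\ ex_derive (Derive u) x) by apply H.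
  destruct (Rle_lt_dec (xi + t) (-101/100)) as [Hh|Ht2].
  - assert (HG : forall x, 0 <= x <= t -> 0 <= u x * Derive u x).
    { intros x Hx. replace 0 with (u 0 * Derive u 0) by (destruct H as [_ [_ [H3 _]]]; rewrite H3; ring).
      apply (mono_le (fun x => u x * Derive u x)
       (fun x => Derive u x ^2 + ((xi+x)^2 - lam) * u x ^2)). lra.
      intros y Hy. auto_derive. sd Hd. etafix. rewrite (eig_ode xi lam u H y) by lra. ring.
      intros y Hy. assert (lam <= (xi+y)^2) by nra. nra. }
    assert (Hu0 : u 0 ^2 <= u t ^2).
    { apply (mono_le (fun x => u x ^2) (fun x => 2 * (u x * Derive u x))). auto.
      intros y Hy. auto_derive. sd Hd. etafix. ring.
      intros y Hy. specialize (HG y Hy). lra. }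
    rewrite Hz in Hu0. assert (Hu00 : u 0 = 0) by nra.
    apply (eig_nondeg xi lam u 0 H (Rle_refl 0) Hu00). apply H.
  - destruct (Rtotal_order (Derive u t) 0) as [Hn|[Hzz|Hp]].
    + apply (tail_core xi lam (fun x => - u x) t (eig_opp xi lam u H) Hl Ht). lra.
      rewrite Hz; ring. rewrite Derive_opp. lra.
    + tauto.
    + apply (tail_core xi lam u t H Hl Ht); auto; lra.
Qed.

Lemma core_final xi l0 l1 u0 u1 : deGennes_eigenpair xi l0 u0 -> deGennes_eigenpair xi l1 u1 ->
  l0 < l1 -> l1 < 51/50 -> (forall t, 0 <= t -> 0 < u0 t) -> (forall t, 0 <= t -> 0 < u1 t) -> False.
Proof.
  intros H0 H1 Hl Hc P0 P1.
  assert (Hd0 : forall x, ex_derive u0 x /\ ex_derive (Derive u0) x) by apply H0.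
  assert (Hd1 : forall x, ex_derive u1 x /\ ex_derive (Derive u1) x) by apply H1.
  set (W := fun x => u0 x * Derive u1 x - Derive u0 x * u1 x).
  assert (HW : forall x, 0 <= x -> is_derive (fun x => - W x) x ((l1 - l0) * u0 x * u1 x)).
  { intros x Hx. unfold W. auto_derive. sd Hd0; sd Hd1. etafix.
    rewrite (eig_ode xi l0 u0 H0 x Hx), (eig_ode xi l1 u1 H1 x Hx). ring. }
  assert (HW0 : W 0 = 0).
  { unfold W. destruct H0 as [_ [_ [E0 _]]]. destruct H1 as [_ [_ [E1 _]]]. rewrite E0, E1. ring. }
  assert (HW1 : W 1 < 0).
  { assert (- W 0 < - W 1); [|lra].
    apply (mono_lt (fun x => - W x) (fun x => (l1 - l0) * u0 x * u1 x)). lra.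
    intros x Hx. apply HW; lra.
    intros x Hx. assert (0 < u0 x) by (apply P0; lra). assert (0 < u1 x) by (apply P1; lra).
    apply Rmult_lt_0_compat; [apply Rmult_lt_0_compat|]; lra. }
  assert (HWle : forall x, 1 <= x -> W x <= W 1).
  { intros x Hx. assert (- W 1 <= - W x); [|lra].
    apply (mono_le (fun x => - W x) (fun x => (l1 - l0) * u0 x * u1 x)). lra.
    intros y Hy. apply HW; lra.
    intros y Hy. assert (0 < u0 y) by (apply P0; lra). assert (0 < u1 y) by (apply P1; lra).
    apply Rmult_le_pos; [apply Rmult_le_pos|]; lra. }
  set (T := Rmax 1 (2 - xi)).
  assert (HT1 : 1 <= T) by apply Rmax_l. assert (HT2 : 2 - xi <= T) by apply Rmax_r.
  assert (HT0 : 0 <= T) by lra.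
  assert (Hq0 : forall t, T <= t -> l0 <= (xi+t)^2) by (intros t Ht; nra).
  assert (Hq1 : forall t, T <= t -> l1 <= (xi+t)^2) by (intros t Ht; nra).
  assert (P0' : forall t, T <= t -> 0 < u0 t) by (intros; apply P0; lra).
  assert (P1' : forall t, T <= t -> 0 < u1 t) by (intros; apply P1; lra).
  set (M := - Derive u1 T).
  assert (HWge : forall t, T <= t -> - M * u0 t <= W t).
  { intros t Ht. unfold W, M.
    destruct (tail_pos xi l1 u1 T H1 HT0 Hq1 P1' t Ht).
    destruct (tail_pos xi l0 u0 T H0 HT0 Hq0 P0' t Ht).
    specialize (P0' t Ht). specialize (P1' t Ht). nra. }
  assert (HM0 : 0 <= M) by (unfold M; destruct (tail_pos xi l1 u1 T H1 HT0 Hq1 P1' T (Rle_refl _)); lra).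
  set (r := - W 1 / (M+1)).
  assert (Hr : 0 < r) by (unfold r; apply Rdiv_lt_0_compat; lra).
  assert (Hr2 : - W 1 = r * (M+1)) by (unfold r; field; lra).
  destruct (tail_decay xi l0 u0 T H0 HT0 Hq0 (r^2) ltac:(nra)) as [t1 [Ht1 Hdec]].
  specialize (Hdec t1 ltac:(lra)).
  assert (Hu1 := P0' t1 Ht1).
  assert (Hlt : u0 t1 < r) by nra.
  specialize (HWge t1 Ht1). specialize (HWle t1 ltac:(lra)).
  nra.
Qed.

Lemma two_eig xi l0 l1 u0 u1 : deGennes_eigenpair xi l0 u0 -> deGennes_eigenpair xi l1 u1 ->
  l0 < l1 -> 51/50 <= l1.
Proof.
  intros H0 H1 Hl. destruct (Rle_lt_dec (51/50) l1) as [|Hc]; auto. exfalso.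
  assert (N0 := no_zero xi l0 u0 H0 ltac:(lra)).
  assert (N1 := no_zero xi l1 u1 H1 Hc).
  destruct (eig_sign xi l0 u0 H0 N0) as [S0|S0];
  destruct (eig_sign xi l1 u1 H1 N1) as [S1|S1].
  - apply (core_final xi l0 l1 u0 u1); auto.
  - apply (core_final xi l0 l1 u0 (fun t => - u1 t)); auto. apply eig_opp; auto.
  - apply (core_final xi l0 l1 (fun t => - u0 t) u1); auto. apply eig_opp; auto.
  - apply (core_final xi l0 l1 (fun t => - u0 t) (fun t => - u1 t)); auto; apply eig_opp; auto.
Qed.

Theorem mainTheorem6 : Rbar_lt (Finite 1) Theta1.
Proof.
  assert (Hmu : forall xi, Rbar_le (Finite (51/50)) (mu1 xi)).
  { intro xi. unfold mu1. destruct (Glb_Rbar_correct (fun lam => is_deGennes_eigenvalue xi lam /\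
                       exists lam0, is_deGennes_eigenvalue xi lam0 /\ lam0 < lam)) as [_ Hg].
    apply Hg. intros lam [[u Hu] [lam0 [[u0 Hu0] Hlt]]]. simpl.
    apply (two_eig xi lam0 lam u0 u); auto. }
  assert (Hth : Rbar_le (Finite (51/50)) Theta1).
  { unfold Theta1. destruct (Glb_Rbar_correct (fun x => exists xi : R, mu1 xi = Finite x)) as [_ Hg].
    apply Hg. intros x [xi Hx]. specialize (Hmu xi). rewrite Hx in Hmu. exact Hmu. }
  apply (Rbar_lt_le_trans _ (Finite (51/50))); auto. simpl; lra.
Qed.
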